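(* Let $P$ be a finite poset of dimension $d$. There exists a constant $c_P$ such that for every positive integer $m$, if a set $S\subseteq[m]^d$ does not contain a copy of $P$, then $|S|\le c_P\, m^{d-1}$.
   Context: $[m]=\{1,\dots,m\}$ and $[m]^d$ is ordered pointwise: $(x_1,\dots,x_d)\le(y_1,\dots,y_d)$ iff $x_i\le y_i$ for all $i$. A subset $P'$ of a poset $Q$ is a copy of $P$ if the subposet of $Q$ induced on $P'$ is isomorphic to $P$. The (Dushnik–Miller) dimension of $P$ is the smallest positive integer $d$ for which there exist bijections $L_1,\dots,L_d:P\to[|P|]$ such that $p\le_P q$ iff $L_i(p)\le L_i(q)$ for every $i\in[d]$. *)

(* Defs.v *)
From mathcomp Require Import all_boot.
Set Implicit Arguments. Unset Strict Implicit. Unset Printing Implicit Defensive.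

Definition is_poset (T : finType) (le : rel T) : Prop :=
  reflexive le /\ antisymmetric le /\ transitive le.

Definition has_realizer (T : finType) (le : rel T) (d : nat) : Prop :=
  exists L : 'I_d -> T -> 'I_#|T|,
    (forall i, bijective (L i)) /\
    (forall p q, le p q = [forall i, L i p <= L i q]).

Definition poset_dim (T : finType) (le : rel T) (d : nat) : Prop :=
  0 < d /\ has_realizer le d /\
  (forall d', 0 < d' -> has_realizer le d' -> d <= d').

(* The grid [m]^d, coordinates shifted to {0,..,m-1} via 'I_m. *)
Definition grid (d m : nat) := {ffun 'I_d -> 'I_m}.

Definition grid_le (d m : nat) (x y : grid d m) : bool :=
  [forall i, x i <= y i].

(* S contains a copy of P: there is a subset of S whose induced subposet is
   isomorphic to P, i.e. an injective map f : P -> S with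
   p <=_P q  iff  f p <= f q. *)
Definition contains_copy (T : finType) (le : rel T) (d m : nat)
  (S : {set grid d m}) : Prop :=
  exists f : T -> grid d m,
    injective f /\ (forall p, f p \in S) /\
    (forall p q, le p q = grid_le (f p) (f q)).

(* Main.v *)
Require Import Defs.
From mathcomp Require Import all_boot.
From Stdlib Require Import Classical Lia.
From mathcomp Require Import zify.
Set Implicit Arguments. Unset Strict Implicit. Unset Printing Implicit Defensive.
Lemma incr_into n k (A : {set 'I_n}) : k <= #|A| ->
  exists h : 'I_k -> 'I_n, (forall j, h j \in A) /\ (forall i j : 'I_k, i < j -> h i < h j).
Proof.
case: n A => [|n] A Hk.
  have : #|A| = 0 by apply/eqP; rewrite -leqn0 (leq_trans (max_card _)) // card_ord.
  move=> H0; rewrite H0 leqn0 in Hk; move/eqP: Hk => Hk; subst k.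
  by exists id; split => [[]|[]].
have Htr : transitive (fun x y : 'I_n.+1 => x < y) by move=> x y z; apply: ltn_trans.
have Hs : sorted (fun x y : 'I_n.+1 => x < y) (enum A).
  rewrite /enum_mem -enumT /= sorted_filter //.
  have := iota_ltn_sorted 0 n.+1; rewrite -val_enum_ord sorted_map; exact.
exists (fun j => nth ord0 (enum A) j); split.
  move=> j; rewrite -mem_enum; apply: mem_nth; rewrite -cardE.
  exact: leq_trans (ltn_ord j) Hk.
move=> i j Hij.
by apply: (sorted_ltn_nth Htr) => //; rewrite inE -cardE (leq_trans (ltn_ord _) Hk).
Qed.

Definition contains_pat (T : finType) D k (v : T -> 'I_D -> 'I_k) m (S : {set grid D m}) : Prop :=
  exists G : T -> grid D m, (forall p, G p \in S) /\ (forall p q i, v p i < v q i -> G p i < G q i).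

Lemma card_fibers (A Y : finType) (f : A -> Y) (X : {set A}) r :
  (forall y, #|[set x in X | f x == y]| <= r) -> #|X| <= #|Y| * r.
Proof.
move=> H; rewrite -sum1_card (partition_big f xpredT) //=.
rewrite -sum_nat_const; apply: leq_sum => y _.
apply: leq_trans (H y); rewrite sum1_card; apply: subset_leq_card.
by apply/subsetP => x; rewrite !inE.
Qed.

Lemma fchoice (A : finType) (B : Type) (P : A -> B -> Prop) :
  (forall a, exists b, P a b) -> exists f : A -> B, forall a, P a (f a).
Proof. exact: (@fin_all_exists A (fun _ => B)). Qed.

Lemma lt_div_lt s a b : a %/ s < b %/ s -> a < b.
Proof. by move=> H; rewrite ltnNge; apply/negP => /(leq_div2r s); rewrite leqNgt H. Qed.

Lemma lt_loc s a b : a %/ s = b %/ s -> a %% s < b %% s -> a < b.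
Proof. by move=> H1 H2; rewrite (divn_eq a s) (divn_eq b s) H1 ltn_add2l. Qed.

Definition bl D m s (x : grid D m) : grid D (m %/ s).+1 := [ffun i => inord (x i %/ s)].
Definition loc D m s' (x : grid D m) : grid D s'.+1 := [ffun i => inord (x i %% s'.+1)].
Definition rst D m (x : grid D.+1 m) : grid D m := [ffun j => x (lift ord0 j)].

Lemma blE D m s (x : grid D m) i : (bl s x i : nat) = x i %/ s.
Proof. by rewrite ffunE inordK // ltnS leq_div2r // ltnW. Qed.

Lemma locE D m s' (x : grid D m) i : (loc s' x i : nat) = x i %% s'.+1.
Proof. by rewrite ffunE inordK // ltnS -ltnS ltn_pmod. Qed.

Lemma rstE D m (x : grid D.+1 m) j : rst x j = x (lift ord0 j).
Proof. by rewrite ffunE. Qed.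

Lemma rst_inj D m (x y : grid D.+1 m) : x ord0 = y ord0 -> rst x = rst y -> x = y.
Proof.
move=> H0 H1; apply/ffunP => i; case: (unliftP ord0 i) => [j ->|-> //].
by rewrite -!rstE H1.
Qed.

Lemma bl_loc_inj D m s' (x y : grid D m) : bl s'.+1 x = bl s'.+1 y -> loc s' x = loc s' y -> x = y.
Proof.
move=> H1 H2; apply/ffunP => i; apply/val_inj => /=.
by rewrite (divn_eq (x i) s'.+1) (divn_eq (y i) s'.+1) -!blE -!locE H1 H2.
Qed.

Lemma blocks_avoid (T : finType) D k (v : T -> 'I_D -> 'I_k) m s (S : {set grid D m}) :
  ~ contains_pat v S -> ~ contains_pat v (bl s @: S).
Proof.
move=> HS [G [HG1 HG2]]; apply: HS.
have [x Hx] : exists x : T -> grid D m, forall p, x p \in S /\ bl s (x p) = G p.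
  apply: (fchoice (P := fun p y => y \in S /\ bl s y = G p)) => p; case/imsetP: (HG1 p) => y Hy ->; by exists y.
exists x; split => [p|p q i H]; first by case: (Hx p).
apply: (@lt_div_lt s); rewrite -!blE (proj2 (Hx p)) (proj2 (Hx q)); exact: HG2.
Qed.

Lemma base k (T : finType) (v : T -> 'I_1 -> 'I_k) m (S : {set grid 1 m}) : ~ contains_pat v S -> #|S| <= k.
Proof.
move=> HS; rewrite leqNgt; apply/negP => Hk; apply: HS.
set A := [set (x : grid 1 m) ord0 | x in S].
have HA : #|A| = #|S|.
  apply: card_in_imset => x y _ _ H; apply/ffunP => i; by rewrite (ord1 i).
have [h [Hh1 Hh2]] := incr_into (ltnW (leq_trans Hk (eq_leq (esym HA)))).
have [x Hx] : exists x : T -> grid 1 m, forall p, x p \in S /\ x p ord0 = h (v p ord0).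
  apply: (fchoice (P := fun p y => y \in S /\ y ord0 = h (v p ord0))) => p; case/imsetP: (Hh1 (v p ord0)) => y Hy E; by exists y.
exists x; split => [p|p q i]; first by case: (Hx p).
rewrite (ord1 i) (proj2 (Hx p)) (proj2 (Hx q)); exact: Hh2.
Qed.

Definition Sb D m s' (S : {set grid D m}) (b : grid D (m %/ s'.+1).+1) :=
  [set x in S | bl s'.+1 x == b].
Arguments Sb {D m} s' S b.
Definition projA n m s' (S : {set grid n.+2 m}) b : {set grid n.+1 s'.+1} :=
  [set rst (loc s' x) | x in Sb s' S b].
Definition c0s n m s' (S : {set grid n.+2 m}) b : {set 'I_s'.+1} :=
  [set (loc s' x) ord0 | x in Sb s' S b].

Arguments projA {n m} s' S b.
Arguments c0s {n m} s' S b.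

Lemma SbP D m s' (S : {set grid D m}) b x : x \in Sb s' S b -> x \in S /\ bl s'.+1 x = b.
Proof. by rewrite inE => /andP [-> /eqP ->]. Qed.

Lemma card_Sb n m s' (S : {set grid n.+2 m}) b :
  #|Sb s' S b| <= #|projA s' S b| * #|c0s s' S b|.
Proof.
rewrite -cardsX -(@card_in_imset _ _ (fun x => (rst (loc s' x), loc s' x ord0)) (Sb s' S b)).
  apply: subset_leq_card; apply/subsetP => z /imsetP [x Hx ->].
  by rewrite inE /=; apply/andP; split; apply/imsetP; exists x.
move=> x y Hx Hy [E1 E2]; apply: (@bl_loc_inj _ _ s').
  by rewrite (proj2 (SbP Hx)) (proj2 (SbP Hy)).
exact: rst_inj.
Qed.

Lemma fiberA n k (T : finType) (v : T -> 'I_n.+2 -> 'I_k) c s' m (S : {set grid n.+2 m})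
  (IH : forall X : {set grid n.+1 s'.+1},
        ~ contains_pat (fun p j => v p (lift ord0 j)) X -> #|X| <= c * s'.+1 ^ n)
  (HS : ~ contains_pat v S) (l : grid n.+1 (m %/ s'.+1).+1) (Q : {set grid n.+1 s'.+1}) :
  #|[set b in [set b | c * s'.+1 ^ n < #|projA s' S b|] | (rst b, projA s' S b) == (l, Q)]| <= k.
Proof.
rewrite leqNgt; apply/negP => Hk; apply: HS.
set F := [set b in _ | _] in Hk.
have [b0 Hb0] : exists b0, b0 \in F by apply/set0Pn; rewrite -card_gt0 (leq_ltn_trans _ Hk).
have HF b : b \in F -> [/\ c * s'.+1 ^ n < #|projA s' S b|, rst b = l & projA s' S b = Q].
  by rewrite !inE => /andP [H /eqP [E1 E2]]; split.
have [g [Hg1 Hg2]] : contains_pat (fun p j => v p (lift ord0 j)) Q.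
  apply: NNPP => H; have := IH _ H; case: (HF b0 Hb0) => H1 _ <-; by rewrite leqNgt H1.
set A0 := [set (b : grid n.+2 (m %/ s'.+1).+1) ord0 | b in F].
have HA0 : #|A0| = #|F|.
  apply: card_in_imset => b b' Hb Hb' E; apply: rst_inj => //.
  by case: (HF b Hb) => _ -> _; case: (HF b' Hb') => _ -> _.
have Hk0 : k <= #|A0| by rewrite HA0 ltnW.
have [h [Hh1 Hh2]] := incr_into Hk0.
have [beta Hbeta] : exists beta : T -> grid n.+2 (m %/ s'.+1).+1,
    forall p, beta p \in F /\ beta p ord0 = h (v p ord0).
  apply: (fchoice (P := fun p b => b \in F /\ b ord0 = h (v p ord0))) => p.
  by case/imsetP: (Hh1 (v p ord0)) => b Hb E; exists b.
have [x Hx] : exists x : T -> grid n.+2 m,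
    forall p, x p \in Sb s' S (beta p) /\ rst (loc s' (x p)) = g p.
  apply: (fchoice (P := fun p x => x \in Sb s' S (beta p) /\ rst (loc s' x) = g p)) => p.
  have := Hg1 p; case: (HF _ (proj1 (Hbeta p))) => _ _ <-.
  by case/imsetP => z Hz E; exists z.
exists x; split => [p|p q i H]; first exact: (proj1 (SbP (proj1 (Hx p)))).
have Ebp := proj2 (SbP (proj1 (Hx p))); have Ebq := proj2 (SbP (proj1 (Hx q))).
case: (unliftP ord0 i) H => [j -> | ->] H.
  apply: (@lt_loc s'.+1).
    rewrite -!blE Ebp Ebq -!rstE.
    by case: (HF _ (proj1 (Hbeta p))) => _ -> _; case: (HF _ (proj1 (Hbeta q))) => _ -> _.
  rewrite -!locE -!rstE (proj2 (Hx p)) (proj2 (Hx q)); exact: Hg2.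
apply: (@lt_div_lt s'.+1); rewrite -!blE Ebp Ebq (proj2 (Hbeta p)) (proj2 (Hbeta q)).
exact: Hh2.
Qed.

Lemma fiberB n k (T : finType) (v : T -> 'I_n.+2 -> 'I_k) c s' m (S : {set grid n.+2 m})
  (IH : forall X : {set grid n.+1 (m %/ s'.+1).+1},
        ~ contains_pat (fun p j => v p (lift ord0 j)) X -> #|X| <= c * (m %/ s'.+1).+1 ^ n)
  (HS : ~ contains_pat v S) (a : 'I_(m %/ s'.+1).+1) (C : {set 'I_s'.+1}) :
  #|[set b in [set b | k <= #|c0s s' S b|] | (b ord0, c0s s' S b) == (a, C)]| <= c * (m %/ s'.+1).+1 ^ n.
Proof.
rewrite leqNgt; apply/negP => Hk; apply: HS.
set F := [set b in _ | _] in Hk.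
have [b0 Hb0] : exists b0, b0 \in F by apply/set0Pn; rewrite -card_gt0 (leq_ltn_trans _ Hk).
have HF b : b \in F -> [/\ k <= #|c0s s' S b|, b ord0 = a & c0s s' S b = C].
  by rewrite !inE => /andP [H /eqP [E1 E2]]; split.
set R := [set rst b | b in F].
have HR : #|R| = #|F|.
  apply: card_in_imset => b b' Hb Hb' E; apply: rst_inj => //.
  by case: (HF b Hb) => _ -> _; case: (HF b' Hb') => _ -> _.
have [g [Hg1 Hg2]] : contains_pat (fun p j => v p (lift ord0 j)) R.
  by apply: NNPP => H; have := IH _ H; rewrite HR leqNgt Hk.
have [h [Hh1 Hh2]] : exists h : 'I_k -> 'I_s'.+1,
    (forall j, h j \in C) /\ (forall i j : 'I_k, i < j -> h i < h j).
  by apply: incr_into; case: (HF b0 Hb0) => H _ <-.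
have [beta Hbeta] : exists beta : T -> grid n.+2 (m %/ s'.+1).+1,
    forall p, beta p \in F /\ rst (beta p) = g p.
  apply: (fchoice (P := fun p b => b \in F /\ rst b = g p)) => p.
  by case/imsetP: (Hg1 p) => b Hb E; exists b.
have [x Hx] : exists x : T -> grid n.+2 m,
    forall p, x p \in Sb s' S (beta p) /\ loc s' (x p) ord0 = h (v p ord0).
  apply: (fchoice (P := fun p x => x \in Sb s' S (beta p) /\ loc s' x ord0 = h (v p ord0))) => p.
  have := Hh1 (v p ord0); case: (HF _ (proj1 (Hbeta p))) => _ _ <-.
  by case/imsetP => z Hz E; exists z.
exists x; split => [p|p q i H]; first exact: (proj1 (SbP (proj1 (Hx p)))).
have Ebp := proj2 (SbP (proj1 (Hx p))); have Ebq := proj2 (SbP (proj1 (Hx q))).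
case: (unliftP ord0 i) H => [j -> | ->] H.
  apply: (@lt_div_lt s'.+1); rewrite -!blE Ebp Ebq -!rstE (proj2 (Hbeta p)) (proj2 (Hbeta q)).
  exact: Hg2.
apply: (@lt_loc s'.+1).
  rewrite -!blE Ebp Ebq.
  by case: (HF _ (proj1 (Hbeta p))) => _ -> _; case: (HF _ (proj1 (Hbeta q))) => _ -> _.
rewrite -!locE (proj2 (Hx p)) (proj2 (Hx q)); exact: Hh2.
Qed.

Lemma sum_in (A : finType) (X : {set A}) : \sum_(a : A) (a \in X : nat) = #|X|.
Proof. by rewrite -sum1_card [RHS]big_mkcond; apply: eq_bigr => a _; case: (a \in X). Qed.

Lemma card_grid D m : #|grid D m| = m ^ D.
Proof. by rewrite card_ffun !card_ord. Qed.

Lemma arith_key c k Kt Sn P s : c * k * (2 * P) <= s ->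
  (c * Sn * k * (s + s * Kt * (2 * P)) + s * (s * Sn) * Kt) * P <= s * Sn * (s + s * Kt * (2 * P)).
Proof.
move=> Hs; set C := s + s * Kt * (2 * P).
have H1 : c * k * (2 * P) * (Sn * C) <= s * (Sn * C) by apply: leq_mul.
have H2 : s * Sn * (s * Kt * (2 * P)) <= s * Sn * C by rewrite leq_mul2l leq_addl orbT.
nia.
Qed.

Lemma step n k (T : finType) (v : T -> 'I_n.+2 -> 'I_k) c
  (IH : forall M (X : {set grid n.+1 M}),
        ~ contains_pat (fun p j => v p (lift ord0 j)) X -> #|X| <= c * M ^ n) :
  exists C, forall m (S : {set grid n.+2 m}), ~ contains_pat v S -> #|S| <= C * m ^ n.+1.
Proof.
set s' := (c * k * 2 ^ n.+2).+2; set s := s'.+1.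
set NA := #|{set grid n.+1 s}|; set NB := #|{set 'I_s}|.
set Kt := NA * k + NB * c.
set C := s + s * Kt * 2 ^ n.+2.
exists C; elim/ltn_ind => m IHm S HS.
case: (leqP m s) => Hms.
  apply: (leq_trans (max_card _)); rewrite card_grid expnS.
  apply: leq_mul => //; apply: (leq_trans Hms); exact: leq_addr.
set q := m %/ s; set m' := q.+1.
have Hq : q * s <= m by rewrite [X in _ <= X](divn_eq m s) leq_addr.
have H3q : 3 * q <= m by apply: leq_trans Hq; rewrite mulnC leq_mul2l ltnS ltnS ltnS leq0n orbT.
have Hm' : m' < m by rewrite /m'; lia.
have Hsm : s * m' <= 2 * m by rewrite /m' mulnS mulnC; lia.
set B := bl s @: S.
have HB : #|B| <= C * m' ^ n.+1 := IHm _ Hm' B (blocks_avoid HS).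
set L := c * s ^ n * k.
set AS := [set b | c * s ^ n < #|projA s' S b|].
set BS := [set b | k <= #|c0s s' S b|].
have Hper b : #|Sb s' S b| <= L * (b \in B) + s ^ n.+2 * (b \in AS) + s ^ n.+2 * (b \in BS).
  case HBb : (b \in B); last first.
    suff -> : Sb s' S b = set0 by rewrite cards0.
    apply/setP => x; rewrite in_set0; apply/negbTE/negP => /SbP [Hx Ex].
    by move/negbT/negP: HBb; apply; apply/imsetP; exists x.
  apply: (leq_trans (card_Sb _ _)).
  have HpA : #|projA s' S b| <= s ^ n.+1 by rewrite -card_grid max_card.
  have HpC : #|c0s s' S b| <= s by rewrite -[X in _ <= X](card_ord s) max_card.
  have Hbig : #|projA s' S b| * #|c0s s' S b| <= s ^ n.+2 by rewrite expnSr; exact: leq_mul.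
  rewrite !inE; case: (leqP #|projA s' S b| (c * s ^ n)) => HA';
    case: (leqP k #|c0s s' S b|) => HB' /=; rewrite ?muln0 ?muln1 ?addn0;
    try exact: leq_trans Hbig (leq_addl _ _).
  by rewrite /L; apply: leq_mul => //; exact: ltnW.
have HSsum : #|S| = \sum_b #|Sb s' S b|.
  rewrite -sum1_card (partition_big (bl s) xpredT) //; apply: eq_bigr => b _.
  by rewrite -sum1_card; apply: eq_bigl => x; rewrite inE.
have HAS : #|AS| <= #|{: grid n.+1 m' * {set grid n.+1 s}}| * k.
  apply: (card_fibers (f := fun b => (rst b, projA s' S b))) => -[l Q].
  apply: (fiberA (v := v)) => //; exact: IH.
have HBS : #|BS| <= #|{: 'I_m' * {set 'I_s}}| * (c * m' ^ n).
  apply: (card_fibers (f := fun b : grid n.+2 m' => (b ord0, c0s s' S b))) => -[a Cc].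
  apply: (fiberB (v := v)) => //; exact: IH.
rewrite card_prod card_grid in HAS; rewrite card_prod card_ord in HBS.
have HS1 : #|S| <= (L * C + s ^ n.+2 * Kt) * m' ^ n.+1.
  rewrite HSsum; apply: (@leq_trans (\sum_b (L * (b \in B) + s ^ n.+2 * (b \in AS) + s ^ n.+2 * (b \in BS)))).
    by apply: leq_sum => b _; exact: Hper.
  rewrite !big_split /= -!big_distrr /= !sum_in.
  rewrite mulnDl -addnA; apply: leq_add; first by rewrite -mulnA leq_mul2l HB orbT.
  rewrite -mulnA -mulnDr leq_mul2l; apply/orP; right.
  rewrite /Kt mulnDl; apply: leq_add.
    apply: (leq_trans HAS); rewrite /NA; move: (m' ^ n.+1) (#|_|) => P N; nia.
  apply: (leq_trans HBS); rewrite /NB expnS; move: (m' ^ n) (#|_|) => P N; nia.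
have Hs0 : 0 < s ^ n.+1 by rewrite expn_gt0.
rewrite -(leq_pmul2l Hs0); apply: (leq_trans (leq_mul (leqnn _) HS1)).
have E2 : (s * m') ^ n.+1 <= (2 * m) ^ n.+1 by rewrite leq_exp2r.
have Hkey : (L * C + s ^ n.+2 * Kt) * 2 ^ n.+1 <= s ^ n.+1 * C.
  have e1 : s ^ n.+1 = s * s ^ n := expnS _ _.
  have e2 : s ^ n.+2 = s * (s * s ^ n) by rewrite expnS e1.
  have e3 : 2 ^ n.+2 = 2 * 2 ^ n.+1 := expnS _ _.
  rewrite /L /C e2 e1 e3.
  apply: arith_key; rewrite /s /s' -expnS; lia.
apply: (leq_trans (n := (L * C + s ^ n.+2 * Kt) * (2 * m) ^ n.+1)).
  by rewrite mulnCA -expnMn leq_mul2l E2 orbT.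
by rewrite expnMn mulnA mulnA leq_mul2r Hkey orbT.
Qed.

Lemma main n : forall k (T : finType) (v : T -> 'I_n.+1 -> 'I_k),
  exists c, forall m (S : {set grid n.+1 m}), ~ contains_pat v S -> #|S| <= c * m ^ n.
Proof.
elim: n => [|n IHn] k T v.
  by exists k => m S HS; rewrite expn0 muln1; exact: base HS.
have [c Hc] := IHn k T (fun p j => v p (lift ord0 j)).
exact: step Hc.
Qed.

Theorem corollary4 (T : finType) (le : rel T) (d : nat) :
  is_poset le -> poset_dim le d ->
  exists c : nat, forall (m : nat), 0 < m ->
    forall S : {set grid d m}, ~ contains_copy le S ->
      #|S| <= c * m ^ (d - 1).
Proof.
move=> _ [Hd [[L [Lbij Lle]] _]].
case: d Hd L Lbij Lle => // d _ L Lbij Lle.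
have [c Hc] := main (fun p i => L i p).
exists c => m _ S Hcopy; rewrite subn1 /=; apply: Hc => -[G [HG1 HG2]]; apply: Hcopy.
have Linj i : injective (L i) by apply: bij_inj.
exists G; split; [|split] => //.
  move=> p q E; case: (ltngtP (L ord0 p) (L ord0 q)) => H.
  - by have := HG2 p q ord0 H; rewrite E ltnn.
  - by have := HG2 q p ord0 H; rewrite E ltnn.
  - exact: Linj (val_inj H).
move=> p q; rewrite Lle /grid_le; apply: eq_forallb => i.
case: (ltngtP (L i p) (L i q)) => H.
- by rewrite (ltnW (HG2 p q i H)).
- by rewrite leqNgt (HG2 q p i H).
- by rewrite (Linj i _ _ (val_inj H)) leqnn.
Qed.
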